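(* Let $G$ be a group acting on posets $P$ and $Q$ by order-preserving bijections, and let $\varphi:P\to Q$ be an order-preserving $G$-map (i.e. $\varphi(gx)=g\varphi(x)$ for all $g\in G$, $x\in P$). Let $R\subset Q$ be a subset containing exactly one representative of each $G$-orbit of $Q$. Assume that for each $r\in R$ we are given a $G_r$-equivariant acyclic matching $M_r$ on the subposet $\varphi^{-1}(r)$ (on which the stabilizer $G_r=\{g\in G\mid gr=r\}$ acts), and let $C_r$ denote the set of critical elements of $M_r$. Then there exists a $G$-equivariant acyclic matching on $P$ whose set of critical elements is \[\bigcup_{g\in G,\ r\in R} gC_r .\] Moreover, if $r\in R$ is such that $G_r$ acts transitively on $C_r$, then $G$ acts transitively on $\bigcup_{g\in G} gC_r$.
   Context: For a poset $P$, a partial matching is a set $M$ of pairs $(a,b)$ of elements of $P$ such that $b$ covers $a$ (i.e. $a<b$ and there is no $c$ with $a<c<b$), and each element of $P$ lies in at most one pair of $M$. It is acyclic if there is no cycle $b_1>a_1<b_2>a_2<\dots<b_t>a_t<b_1$ with $t\ge 2$, the $b_i$ pairwise distinct and $(a_i,b_i)\in M$ for all $i$. The critical elements of $M$ are the elements of $P$ contained in no pair of $M$. If a group $H$ acts on $P$, a matching $M$ is $H$-equivariant if $(a,b)\in M$ implies $(ha,hb)\in M$ for all $h\in H$. *)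

(* Defs.v *)
From HB Require Import structures.
From mathcomp Require Import all_boot all_order.
Set Implicit Arguments. Unset Strict Implicit. Unset Printing Implicit Defensive.
Import Order.TTheory.
Local Open Scope order_scope.

Definition is_group (G : Type) (mul : G -> G -> G) (one : G) (inv : G -> G) : Prop :=
  [/\ forall a b c, mul a (mul b c) = mul (mul a b) c,
      forall a, mul one a = a &
      forall a, mul (inv a) a = one].

Definition is_action (G X : Type) (mul : G -> G -> G) (one : G) (act : G -> X -> X) : Prop :=
  (forall x, act one x = x) /\ (forall g h x, act (mul g h) x = act g (act h x)).

(* Each g acts by an order-preserving map (it is then automatically an
   order-preserving bijection, with inverse act (inv g)). *)
Definition order_preserving_action (G : Type) (d : Order.disp_t) (X : porderType d)
  (act : G -> X -> X) : Prop :=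
  forall g (x y : X), x <= y -> act g x <= act g y.

Definition covers_in (d : Order.disp_t) (P : porderType d) (S : P -> Prop) (a b : P) : Prop :=
  [/\ S a, S b, a < b & ~ (exists c, [/\ S c, a < c & c < b])].

Definition matching_on (d : Order.disp_t) (P : porderType d) (S : P -> Prop)
  (M : P -> P -> Prop) : Prop :=
  (forall a b, M a b -> covers_in S a b) /\
  (forall a b a' b', M a b -> M a' b' ->
     (a = a' \/ a = b' \/ b = a' \/ b = b') -> a = a' /\ b = b').

(* No cycle b_1 > a_1 < b_2 > a_2 < ... < b_t > a_t < b_1 with t >= 2,
   the b_i pairwise distinct and (a_i, b_i) in M (indices taken mod t,
   starting at 0). *)
Definition acyclic (d : Order.disp_t) (P : porderType d) (M : P -> P -> Prop) : Prop :=
  ~ (exists (t : nat) (a b : nat -> P),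
       [/\ (2 <= t)%N,
           forall i, (i < t)%N -> M (a i) (b i),
           forall i, (i < t)%N -> a i < b ((i.+1) %% t) &
           forall i j, (i < t)%N -> (j < t)%N -> b i = b j -> i = j]).

Definition acyclic_matching_on (d : Order.disp_t) (P : porderType d) (S : P -> Prop)
  (M : P -> P -> Prop) : Prop :=
  matching_on S M /\ acyclic M.

Definition critical (d : Order.disp_t) (P : porderType d) (S : P -> Prop)
  (M : P -> P -> Prop) (x : P) : Prop :=
  S x /\ ~ (exists y, M x y \/ M y x).

Definition equivariant (G X : Type) (act : G -> X -> X) (H : G -> Prop)
  (M : X -> X -> Prop) : Prop :=
  forall h a b, H h -> M a b -> M (act h a) (act h b).

(* Main.v *)
Require Import Defs.
From HB Require Import structures.
From mathcomp Require Import all_boot all_order.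
Import Order.TTheory.
Local Open Scope order_scope.

Theorem proposition6
  (G : Type) (mul : G -> G -> G) (one : G) (inv : G -> G)
  (HG : is_group mul one inv)
  (dP dQ : Order.disp_t) (P : porderType dP) (Q : porderType dQ)
  (actP : G -> P -> P) (actQ : G -> Q -> Q)
  (HaP : is_action mul one actP) (HaQ : is_action mul one actQ)
  (HoP : order_preserving_action actP) (HoQ : order_preserving_action actQ)
  (phi : P -> Q)
  (Hphi_mono : forall x y : P, x <= y -> phi x <= phi y)
  (Hphi_equiv : forall g (x : P), phi (actP g x) = actQ g (phi x))
  (R : Q -> Prop)
  (HR_exists : forall q : Q, exists r, R r /\ exists g, actQ g r = q)
  (HR_unique : forall r r' : Q, R r -> R r' -> (exists g, actQ g r = r') -> r = r')
  (M : Q -> P -> P -> Prop)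
  (HM : forall r, R r ->
     acyclic_matching_on (fun x => phi x = r) (M r) /\
     equivariant actP (fun g => actQ g r = r) (M r)) :
  (exists MP : P -> P -> Prop,
     [/\ acyclic_matching_on (fun _ => True) MP,
         equivariant actP (fun _ => True) MP &
         forall x : P,
           critical (fun _ => True) MP x <->
           exists g r c, [/\ R r, critical (fun y => phi y = r) (M r) c & x = actP g c]])
  /\
  (forall r, R r ->
     (forall c c', critical (fun y => phi y = r) (M r) c ->
                   critical (fun y => phi y = r) (M r) c' ->
                   exists g, actQ g r = r /\ actP g c = c') ->
     forall x y,
       (exists g c, critical (fun z => phi z = r) (M r) c /\ x = actP g c) ->
       (exists g c, critical (fun z => phi z = r) (M r) c /\ y = actP g c) ->
       exists g, actP g x = y).
Proof.
case: HG => Hassoc Hone Hinv.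
case: HaP => HP1 HPm; case: HaQ => HQ1 HQm.
have mulV : forall g, mul g (inv g) = one.
  move=> g; rewrite -[mul g (inv g)]Hone -{1}(Hinv (inv g)) -Hassoc.
  by rewrite (Hassoc (inv g) g (inv g)) (Hinv g) Hone Hinv.
have aPK : forall g x, actP (inv g) (actP g x) = x by move=> g x; rewrite -HPm Hinv HP1.
have aPKV : forall g x, actP g (actP (inv g) x) = x by move=> g x; rewrite -HPm mulV HP1.
have aQK : forall g x, actQ (inv g) (actQ g x) = x by move=> g x; rewrite -HQm Hinv HQ1.
have aP_inj : forall g x y, actP g x = actP g y -> x = y.
  by move=> g x y H; rewrite -(aPK g x) H aPK.
have aP_lt : forall g x y, x < y -> actP g x < actP g y.
  move=> g x y; rewrite !lt_neqAle => /andP[nxy lxy]; apply/andP; split; last exact: HoP.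
  by apply: contra nxy => /eqP/aP_inj ->.
have Hrep : forall q, exists r g, R r /\ actQ g r = q.
  by move=> q; have [r [Rr [g Hg]]] := HR_exists q; exists r, g.
pose MP := fun a b => exists g r a' b', [/\ R r, M r a' b', a = actP g a' & b = actP g b'].
have Mcov : forall r a b, R r -> M r a b -> covers_in (fun x => phi x = r) a b.
  by move=> r a b Rr; have [[[Hc _] _] _] := HM r Rr; apply: Hc.
have fib : forall r a b, R r -> M r a b -> phi a = r /\ phi b = r.
  by move=> r a b Rr Mab; case: (Mcov r a b Rr Mab).
have transp : forall a b r g, MP a b -> R r -> actQ g r = phi a ->
    M r (actP (inv g) a) (actP (inv g) b).
  move=> a b r g [g' [r' [a' [b' [Rr' Mab' -> ->]]]]] Rr Hg.
  have [fa _] := fib _ _ _ Rr' Mab'.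
  rewrite Hphi_equiv fa in Hg.
  have Hst : actQ (mul (inv g) g') r' = r by rewrite HQm -Hg aQK.
  have er : r' = r by apply: HR_unique => //; exists (mul (inv g) g').
  move: Hst Mab'; rewrite er => Hst Mab'.
  have := (HM r Rr).2 (mul (inv g) g') a' b' Hst Mab'.
  by rewrite !HPm.
have MPfib : forall a b, MP a b -> phi a = phi b.
  move=> a b [g [r [a' [b' [Rr Mab -> ->]]]]]; have [e1 e2] := fib _ _ _ Rr Mab.
  by rewrite !Hphi_equiv e1 e2.
have MPback : forall a b, MP a b -> exists r g,
    [/\ R r, actQ g r = phi a & M r (actP (inv g) a) (actP (inv g) b)].
  move=> a b H; have [r [g [Rr Hg]]] := Hrep (phi a); exists r, g; split => //.
  exact: transp.
split.
  exists MP; split.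
  - split; first split.
    + move=> a b Hab. have [r [g [Rr Hg Mr]]] := MPback a b Hab.
      have [_ _ lt0 nob] := Mcov _ _ _ Rr Mr.
      have ea : a = actP g (actP (inv g) a) by rewrite aPKV.
      have eb : b = actP g (actP (inv g) b) by rewrite aPKV.
      split => //; first by rewrite ea eb; apply: aP_lt.
      move=> [c [_ ac cb]]; apply: nob; exists (actP (inv g) c); split.
      * have ec : phi c = phi a.
          apply/le_anti/andP; split; last exact: Hphi_mono (ltW ac).
          rewrite (MPfib _ _ Hab); exact: Hphi_mono (ltW cb).
        by rewrite Hphi_equiv ec -Hg aQK.
      * exact: aP_lt.
      * exact: aP_lt.
    + move=> a b a' b' H1 H2 Hov.
      have f1 := MPfib _ _ H1; have f2 := MPfib _ _ H2.
      have e : phi a' = phi a by case: Hov => [e|[e|[e|e]]]; congruence.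
      have [r [g [Rr Hg]]] := Hrep (phi a).
      have M1 := transp a b r g H1 Rr Hg.
      have M2 := transp a' b' r g H2 Rr (etrans Hg (esym e)).
      have [[_ Hd] _] := (HM r Rr).1.
      have [e1 e2] : actP (inv g) a = actP (inv g) a' /\ actP (inv g) b = actP (inv g) b'.
        by apply: (Hd _ _ _ _ M1 M2); case: Hov => [->|[->|[->|->]]]; tauto.
      by split; [apply: aP_inj e1 | apply: aP_inj e2].
    + move=> [t [a [b [t2 Hm Hlt Hdist]]]].
      have t0 : (0 < t)%N by apply: leq_trans t2.
      have ch : forall i, (i < t)%N -> phi (a i) <= phi (a (i.+1 %% t)).
        move=> i it; rewrite (MPfib _ _ (Hm _ (ltn_pmod _ t0))).
        exact: Hphi_mono (ltW (Hlt i it)).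
      have chain : forall j, (j < t)%N -> forall i, (i <= j)%N -> phi (a i) <= phi (a j).
        elim=> [|j IH] jt i ij.
          by move: ij; rewrite leqn0 => /eqP ->.
        rewrite leq_eqVlt in ij; case/orP: ij => [/eqP -> //|ij].
        rewrite ltnS in ij.
        apply: le_trans (IH (ltnW jt) i ij) _.
        by have := ch j (ltnW jt); rewrite modn_small.
      have all_eq : forall i, (i < t)%N -> phi (a i) = phi (a 0).
        move=> i it; apply/le_anti/andP; split; last exact: chain.
        have tp : (t.-1 < t)%N by rewrite prednK.
        apply: le_trans (chain t.-1 tp i _) _; first by rewrite -ltnS prednK.
        by have := ch t.-1 tp; rewrite prednK // modnn.
      have [r [g [Rr Hg]]] := Hrep (phi (a 0)).
      apply: (HM r Rr).1.2.
      exists t, (fun i => actP (inv g) (a i)), (fun i => actP (inv g) (b i)).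
      split => //.
      * by move=> i it; apply: transp => //; [apply: Hm | rewrite all_eq].
      * by move=> i it; apply: aP_lt; apply: Hlt.
      * by move=> i j it jt e; apply: Hdist => //; apply: aP_inj e.
  - move=> h a b _ [g [r [a' [b' [Rr Mr -> ->]]]]].
    by exists (mul h g), r, a', b'; split; rewrite ?HPm.
  - move=> x; split.
    + move=> [_ nc]. have [r [g [Rr Hg]]] := Hrep (phi x).
      exists g, r, (actP (inv g) x); split; [done| |by rewrite aPKV].
      split; first by rewrite Hphi_equiv -Hg aQK.
      move=> [y [My|My]]; apply: nc; exists (actP g y); [left|right].
      * by exists g, r, (actP (inv g) x), y; split => //; rewrite aPKV.
      * by exists g, r, y, (actP (inv g) x); split => //; rewrite aPKV.
    + move=> [g [r [c [Rr [Hc nc] ->]]]]; split => //.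
      have Hg : actQ g r = phi (actP g c) by rewrite Hphi_equiv Hc.
      move=> [y [H|H]]; apply: nc; exists (actP (inv g) y).
      * by left; have := transp _ _ r g H Rr Hg; rewrite aPK.
      * right; have := transp _ _ r g H Rr (etrans Hg (esym (MPfib _ _ H))).
        by rewrite aPK.
move=> r Rr Htr x y [g1 [c1 [Hc1 ->]]] [g2 [c2 [Hc2 ->]]].
have [h [_ Hh]] := Htr c1 c2 Hc1 Hc2.
by exists (mul g2 (mul h (inv g1))); rewrite !HPm aPK Hh.
Qed.
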